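(* Let $B:=\{\omega\in X\mid\xi(\omega)\in\chi_{\mathcal{G}}(\omega)\}$. Then $B\in\mathcal{B}_X$ and $\mathbb{P}(B)=1$.
   Context: $X$ is a Polish space with Borel $\sigma$-algebra $\mathcal{B}_X$, $\mathbb{P}$ a probability measure on $(X,\mathcal{B}_X)$, $\mathcal{G}\subseteq\mathcal{B}_X$ a countably generated sub-$\sigma$-algebra, and $\xi:X\to\mathbb{R}^d$ Borel measurable. For $\omega\in X$ let $A_\omega=\bigcap\{A\in\mathcal{G}\mid\omega\in A\}$. Fix a proper regular conditional probability $\mathbb{P}_{\mathcal{G}}:X\times\mathcal{B}_X\to[0,1]$, i.e.: (a) $\mathbb{P}_{\mathcal{G}}(\omega,\cdot)$ is a probability measure for every $\omega$; (b) for each $B\in\mathcal{B}_X$, $\mathbb{P}_{\mathcal{G}}(\cdot,B)$ is $\mathcal{G}$-measurable and a version of $E_{\mathbb{P}}[\mathbf{1}_B\mid\mathcal{G}]$; (c) there is $N\in\mathcal{G}$ with $\mathbb{P}(N)=0$ such that $\mathbb{P}_{\mathcal{G}}(\omega,B)=\mathbf{1}_B(\omega)$ for all $\omega\in X\setminus N$, $B\in\mathcal{G}$, and $\mathbb{P}_{\mathcal{G}}(\omega,A_\omega)=1$ for $\omega\in X\setminus N$; (d) $\mathbb{P}(A\cap B)=\int_A\mathbb{P}_{\mathcal{G}}(\omega,B)\,\mathbb{P}(d\omega)$ for $A\in\mathcal{G}$, $B\in\mathcal{B}_X$. Define $P_\xi(\omega,C)=\mathbb{P}_{\mathcal{G}}(\omega,\{\tilde\omega\in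 A_\omega\mid\xi(\tilde\omega)\in C\})$ for Borel $C\subseteq\mathbb{R}^d$, and the random set $\chi_{\mathcal{G}}(\omega)=\{x\in\mathbb{R}^d\mid P_\xi(\omega,B_\varepsilon(x))>0\ \forall\varepsilon>0\}$ for $\omega\in X\setminus N$ (the support of $P_\xi(\omega,\cdot)$), and $\chi_{\mathcal{G}}(\omega)=\mathbb{R}^d$ for $\omega\in N$; $B_\varepsilon(x)$ is the open ball of radius $\varepsilon$ centered at $x$. *)

(* Defs.v *)
From HB Require Import structures.
From mathcomp Require Import all_boot all_order all_algebra.
From mathcomp Require Import all_classical all_reals all_analysis measurable_realfun.
Set Implicit Arguments. Unset Strict Implicit. Unset Printing Implicit Defensive.
Import Order.TTheory GRing.Theory Num.Theory.
Import numFieldNormedType.Exports.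
Local Open Scope classical_set_scope.
Local Open Scope ring_scope.

Definition polish (R : realType) (X : topologicalType) : Prop :=
  exists dist : X -> X -> R,
    [/\ (forall x y, 0 <= dist x y),
        (forall x y, dist x y = 0 <-> x = y),
        (forall x y, dist x y = dist y x) &
        (forall x y z, dist x z <= dist x y + dist y z)] /\
    [/\
        (forall U : set X, open U <->
           (forall x, U x -> exists2 e : R, 0 < e &
              [set y | dist x y < e] `<=` U)),
        (forall u : nat -> X,
           (forall e : R, 0 < e -> exists N : nat,
              forall m n, (N <= m)%N -> (N <= n)%N -> dist (u m) (u n) < e) ->
           exists l : X, forall e : R, 0 < e -> exists N : nat,
              forall n, (N <= n)%N -> dist (u n) l < e) &
        (exists S : set X, countable S /\
           forall x (e : R), 0 < e -> exists2 s, S s & dist x s < e)].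

Definition borelType (X : ptopologicalType) := g_sigma_algebraType (@open X).

Definition borel_Rd (R : realType) (d : nat) : set (set 'rV[R]_d) :=
  <<s [set U : set 'rV[R]_d | open U] >>.

Definition eball (R : realType) (d : nat) (x : 'rV[R]_d) (eps : R)
  : set 'rV[R]_d :=
  [set y | \sum_(i < d) (y ord0 i - x ord0 i) ^+ 2 < eps ^+ 2].

Definition atom (X : Type) (G : set (set X)) (w : X) : set X :=
  \bigcap_(A in [set A | G A /\ A w]) A.

Definition countably_generated (X : Type) (G : set (set X)) : Prop :=
  exists C : nat -> set X, G = <<s range C >>.

Definition Pxi (R : realType) (d : nat) (X : ptopologicalType)
  (PG : X -> probability (borelType X) R) (G : set (set X))
  (xi : X -> 'rV[R]_d) (w : X) (C : set 'rV[R]_d) : \bar R :=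
  PG w [set w' | atom G w w' /\ C (xi w')].

(** chi_G(omega): support of P_xi(omega, .) off N, and R^d on N. *)
Definition chiG (R : realType) (d : nat) (X : ptopologicalType)
  (PG : X -> probability (borelType X) R) (G : set (set X))
  (xi : X -> 'rV[R]_d) (N : set X) (w : X) : set 'rV[R]_d :=
  [set x | N w \/
     (~ N w /\ forall eps : R, 0 < eps -> (0 < Pxi PG G xi w (eball x eps))%E)].

(* Main.v *)
Require Import Defs.
From HB Require Import structures.
From mathcomp Require Import all_boot all_order all_algebra.
From mathcomp Require Import all_classical all_reals all_analysis measurable_realfun.
From mathcomp Require Import lra.
Import Order.TTheory GRing.Theory Num.Theory.
Import numFieldNormedType.Exports.
Local Open Scope classical_set_scope.
Local Open Scope ring_scope.
Set Implicit Arguments. Unset Strict Implicit.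

Lemma cont_bigsum (R : realType) (T : topologicalType) (I : Type) (r : seq I)
  (f : I -> T -> R) : (forall i, continuous (f i)) ->
  continuous (fun x => \sum_(i <- r) f i x).
Proof.
move=> cf; elim: r => [|i r IH].
  under eq_fun do rewrite big_nil. exact: cst_continuous.
under eq_fun do rewrite big_cons.
move=> x; exact: (continuousD (cf i x) (IH x)).
Qed.

Lemma sumsq_cont (R : realType) d (x : 'rV[R]_d) :
  continuous (fun y : 'rV[R]_d => \sum_(i < d) (y ord0 i - x ord0 i) ^+ 2).
Proof.
apply: cont_bigsum => i y.
have h : continuous (fun y : 'rV[R]_d => y ord0 i - x ord0 i).
  move=> z; apply: (continuousB (@coord_continuous R 1 d ord0 i z)).
  exact: cst_continuous.
exact: (continuousM (h y) (h y)).
Qed.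

Lemma eball_open (R : realType) d (x : 'rV[R]_d) eps : open (eball x eps).
Proof.
rewrite /eball.
apply: (@open_comp _ _ (fun y : 'rV[R]_d => \sum_(i < d) (y ord0 i - x ord0 i) ^+ 2) [set t | t < eps ^+ 2]).
  by move=> y _; apply: sumsq_cont.
exact: open_lt.
Qed.

Definition box (R : realType) d (a b : 'I_d -> R) : set 'rV[R]_d :=
  [set y | forall i, a i < y ord0 i /\ y ord0 i < b i].

Lemma box_open (R : realType) d (a b : 'I_d -> R) : open (box a b).
Proof.
rewrite openE => y Hy; rewrite /interior.
have := @filter_forall _ _ (fun i z => a i < z ord0 i /\ z ord0 i < b i) (nbhs y) _.
apply => i.
have o : open ((fun z : 'rV[R]_d => z ord0 i) @^-1` `]a i, b i[%classic).
  apply: open_comp; last exact: interval_open.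
  by move=> z _; apply: (@coord_continuous R 1 d ord0 i).
have := open_nbhs_nbhs (conj o _).
move/(_ y); rewrite /= in_itv /=; case: (Hy i) => h1 h2.
rewrite h1 h2 /= => /(_ isT).
apply: filterS => z /=; rewrite in_itv /= => /andP[]; by [].
Qed.
Lemma pos_lb (R : realType) (I : eqType) (s : seq I) (m : I -> R) :
  (forall i, 0 < m i) -> exists2 e, 0 < e & forall i, i \in s -> e <= m i.
Proof.
move=> mp; elim: s => [|j s [e e0 He]]; first by exists 1.
exists (Num.min e (m j)); first by rewrite lt_min e0 mp.
move=> i; rewrite inE => /orP[/eqP->|/He h]; first by rewrite ge_min lexx orbT.
by rewrite ge_min h.
Qed.

Lemma term_le_sum (R : realType) d (f : 'I_d -> R) i :
  (forall j, 0 <= f j) -> f i <= \sum_(j < d) f j.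
Proof.
move=> f0; rewrite (bigD1 i) //= lerDl; apply: sumr_ge0 => j _; exact: f0.
Qed.

Lemma box_in_eball (R : realType) d (a b : 'I_d -> R) (y : 'rV[R]_d) :
  box a b y -> exists2 e, 0 < e & eball y e `<=` box a b.
Proof.
move=> Hy.
have mp : forall i, 0 < Num.min (y ord0 i - a i) (b i - y ord0 i).
  by move=> i; case: (Hy i) => h1 h2; rewrite lt_min !subr_gt0 h1 h2.
have [e e0 He] := pos_lb (enum 'I_d) mp.
exists e => // z Hz i.
have := He i (mem_enum _ i); rewrite le_min => /andP[h1 h2].
have hi := @term_le_sum R d (fun j => (z ord0 j - y ord0 j) ^+ 2) i (fun j => sqr_ge0 _).
rewrite /eball /= in Hz.
have hh : (z ord0 i - y ord0 i) ^+ 2 < e ^+ 2 by apply: le_lt_trans hi Hz.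
rewrite !expr2 in hh.
split; nra.
Qed.


Definition boxq (R : realType) d (f : {ffun 'I_d -> rat * rat}) : set 'rV[R]_d :=
  box (fun i => ratr (f i).1) (fun i => ratr (f i).2).
Arguments boxq R {d}.

Lemma eball_boxq (R : realType) d (x : 'rV[R]_d) eps : 0 < eps ->
  exists f : {ffun 'I_d -> rat * rat}, boxq R f x /\ boxq R f `<=` eball x eps.
Proof.
move=> e0.
pose n : R := d%:R + 1.
have n0 : 0 < n by rewrite /n ltr_wpDl.
pose del := eps / n.
have del0 : 0 < del by rewrite /del divr_gt0.
have E : eps = del * n by rewrite /del divfK // gt_eqF.
clearbody del.
have ch : forall i : 'I_d, exists q : rat * rat,
    x ord0 i - del < ratr q.1 < x ord0 i /\ x ord0 i < ratr q.2 < x ord0 i + del.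
  move=> i.
  have [q1 /[!in_itv]/= h1] := @rat_in_itvoo R (x ord0 i - del) (x ord0 i)
     ltac:(by rewrite gtrBl).
  have [q2 /[!in_itv]/= h2] := @rat_in_itvoo R (x ord0 i) (x ord0 i + del)
     ltac:(by rewrite ltrDl).
  by exists (q1, q2).
have [g Hg] := choice ch.
exists (finfun g); split.
  by move=> i; rewrite ffunE; case: (Hg i) => /andP[_ ->] /andP[-> _].
move=> z Hz; rewrite /eball /=.
have hb : forall i : 'I_d, (z ord0 i - x ord0 i) ^+ 2 <= del ^+ 2.
  move=> i; case: (Hz i); rewrite ffunE => h1 h2.
  case: (Hg i) => /andP[h3 h4] /andP[h5 h6].
  rewrite !expr2; nra.
apply: (le_lt_trans (y := \sum_(i < d) del ^+ 2)).
  by apply: ler_sum => i _; exact: hb.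
rewrite sumr_const card_ord -mulr_natr.
rewrite E.
have dn : d%:R < n ^+ 2.
  rewrite /n; have : (0 : R) <= d%:R by [].
  move=> h; rewrite expr2; nra.
have dd : 0 < del ^+ 2 by exact: exprn_gt0.
rewrite exprMn; by rewrite ltr_pM2l.
Qed.
Lemma atom_cap (T : Type) (G : set (set T)) (C : nat -> set T) (w : T) :
  sigma_algebra setT G -> G = <<s range C >> ->
  let D := fun n => if pselect (C n w) then C n else ~` C n in
  (forall n, G (D n)) /\ atom G w = \bigcap_n D n.
Proof.
move=> sG GC D.
have GD : forall n, G (D n).
  move=> n; have Cn : G (C n) by rewrite GC; apply: sub_gen_smallest; exists n.
  rewrite /D; case: pselect => ? //.
  case: sG => _ hC _; rewrite -setTD; exact: hC.
split => //.
apply/seteqP; split => w' Hw'.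
  move=> n _; apply: Hw'; split; first exact: GD.
  by rewrite /D; case: pselect.
move=> A [GA Aw].
pose S := [set A : set T | A w <-> A w'].
have sS : sigma_algebra setT S.
  split.
  - by rewrite /S /=; split.
  - move=> B; rewrite /S /= => -[h1 h2]; split.
      by move=> [_ nB]; split => // Bx; apply: nB; exact: h2.
    by move=> [_ nB]; split => // Bx; apply: nB; exact: h1.
  - move=> F hF; rewrite /S /=; split => -[n _ Fn]; exists n => //; exact/(hF n).
have : <<s range C >> `<=` S.
  apply: smallest_sub => // _ [n _ <-]; rewrite /S /=.
  have := Hw' n I; rewrite /D; case: pselect => Cw /=.
    by move=> h; split.
  by move=> h; split => // /h.
move=> /(_ A); rewrite -GC => /(_ GA); rewrite /S /=; case=> h _; exact: h.
Qed.
Lemma prob_inter (R : realType) dd (T : measurableType dd) (mu : probability T R)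
  (A S : set T) : measurable A -> measurable S -> mu A = 1%E ->
  mu (A `&` S) = mu S.
Proof.
move=> mA mS mA1.
rewrite [RHS](measureDI mu mS mA) [in LHS]setIC.
have -> : (mu : {content set T -> \bar R}) (S `\` A) = 0%E.
  apply/eqP; rewrite eq_le measure_ge0 andbT.
  have <- : mu (~` A) = 0%E by rewrite probability_setC // mA1 subee.
  by apply: le_measure; rewrite ?inE; [exact: measurableD|exact: measurableC|
    move=> x []].
by rewrite add0e.
Qed.

Unset Implicit Arguments.

Theorem lemma5p5 (R : realType) (d : nat) (X : ptopologicalType)
  (P : probability (borelType X) R)
  (G : set (set X))
  (xi : X -> 'rV[R]_d)
  (PG : X -> probability (borelType X) R)
  (N : set X) :
  polish R X ->
  (* G is a countably generated sub-sigma-algebra of B_X *)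
  sigma_algebra setT G ->
  G `<=` (measurable : set (set (borelType X))) ->
  countably_generated G ->
  (* xi is Borel measurable *)
  (forall C, borel_Rd C -> measurable (xi @^-1` C : set (borelType X))) ->
  (* (b) P_G(., B) is G-measurable *)
  (forall B : set (borelType X), measurable B ->
     @measurable_fun _ _ (g_sigma_algebraType G) _ setT
       (fun w : g_sigma_algebraType G => PG w B : \bar R)) ->
  (* (c) properness off the P-null set N in G *)
  G N -> P N = 0%E ->
  (forall w, ~ N w ->
     (forall B, G B -> PG w B = (\1_B w)%:E) /\ PG w (atom G w) = 1%E) ->
  (* (d) (and (b)): PG(., B) is a version of E[1_B | G] *)
  (forall A B : set (borelType X), G A -> measurable B ->
     P (A `&` B) = (\int[P]_(w in A) PG w B)%E) ->
  let B := [set w | chiG PG G xi N w (xi w)] in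
  measurable (B : set (borelType X)) /\ P B = 1%E.
Proof.
move=> _ sG GB [C GC] xim PGm GN PN0 prop dis B.
have atomM : forall w, measurable (atom G w : set (borelType X)).
  move=> w; have [GD ->] := atom_cap w sG GC.
  apply: bigcapT_measurable => n; apply: GB; exact: GD.
have inter : forall w (S : set (borelType X)), ~ N w -> measurable S ->
    PG w [set w' | atom G w w' /\ S w'] = PG w S.
  move=> w S Nw mS; have [_ h1] := prop w Nw; exact: prob_inter.
have xiO : forall U : set 'rV[R]_d, open U -> measurable (xi @^-1` U : set (borelType X)).
  move=> U oU; apply: xim; rewrite /borel_Rd; exact: sub_gen_smallest.
pose U k : set 'rV[R]_d := if unpickle k is Some f then boxq R f else set0.
have Uo : forall k, open (U k).
  by move=> k; rewrite /U; case: unpickle => [f|]; [exact: box_open | exact: open0].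
pose Z k := [set w : X | PG w (xi @^-1` U k) = 0%E].
have ZG : forall k, G (Z k).
  move=> k; have := PGm _ (xiO _ (Uo k)) measurableT [set 0%E] (emeasurable_set1 _).
  rewrite setTI => h; rewrite -(sigma_algebra_id sG); exact: h.
pose bad := \bigcup_k (xi @^-1` U k `&` Z k).
have badM : measurable (bad : set (borelType X)).
  apply: bigcupT_measurable => k; apply: measurableI; [exact: xiO|exact: GB].
have Pbad : P bad = 0%E.
  apply/eqP; rewrite eq_le measure_ge0 andbT.
  apply: le_trans (measure_sigma_subadditive P (F := fun k => xi @^-1` U k `&` Z k) _ badM _) _.
  - move=> k; apply: measurableI; [exact: xiO|exact: GB].
  - by [].
  rewrite eseries0 // => k _ _.
  rewrite setIC; apply: (etrans (dis _ _ (ZG k) (xiO _ (Uo k)))).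
  by apply: (@integral0_eq _ _ _ P (Z k) (fun w => PG w (xi @^-1` U k))) => w.
have BE : B = N `|` ~` bad.
  have ebM : forall x e, measurable (xi @^-1` eball x e : set (borelType X)).
    by move=> x e; apply: xiO; exact: eball_open.
  apply/seteqP; split => w.
    rewrite /B /chiG /= => -[Nw|[Nw H]]; [by left|right].
    move=> [k _ [Uk Zk]].
    move: Uk Zk; rewrite /Z /U /=; case: unpickle => [f|] //= Uk Zk.
    have [e e0 He] := box_in_eball Uk.
    have := H e e0; rewrite /Pxi inter //; last exact: ebM.
    apply/negP; rewrite -leNgt -Zk.
    apply: le_measure; rewrite ?inE; [exact: ebM|apply: xiO; exact: box_open|].
    by move=> w' /He.
  case => [Nw|nbad]; first by left.
  case: (pselect (N w)) => Nw; first by left.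
  right; split => // eps e0.
  rewrite /Pxi inter //; last exact: ebM.
  rewrite lt_neqAle measure_ge0 andbT; apply/eqP => h0.
  apply: nbad.
  have [f [f1 f2]] := eball_boxq (xi w) e0.
  exists (pickle f) => //; rewrite /U /Z /= pickleK; split => //.
  apply/eqP; rewrite eq_le measure_ge0 andbT h0.
  apply: le_measure; rewrite ?inE; [exact: xiO _ (Uo _)|exact: ebM|].
  by move=> w'; rewrite /= /U pickleK => /f2.
split.
  rewrite BE; apply: measurableU; [exact: GB | exact: measurableC].
apply/eqP; rewrite eq_le probability_le1; last by rewrite BE; apply: measurableU; [exact: GB | exact: measurableC].
have : P (~` bad) = 1%E by rewrite probability_setC // Pbad sube0.
move=> <-; apply: le_measure; rewrite ?inE.
- exact: measurableC.
- by rewrite BE; apply: measurableU; [exact: GB | exact: measurableC].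
- by rewrite BE => w h; right.
Qed.
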